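(* Let $F$ be a smoothed envelope distribution in $\mathrm{MDA}(\gamma)$ with $\gamma\ge0$ and unbounded support, let $G$ be a distribution on $\mathbb N_+$ with $\overline G\le\overline F$, let $X\sim G$, and for $u\ge1$ define $$\Sigma(u)=\mathbb E\big[\mathbb I\{X>u\}\log(1+X-u)\big].$$ Then for every $\epsilon>0$ there exists $t_0$ (depending on $\epsilon$ and $F$) such that for all $t>t_0$ and all $u\ge 1$, $$\Sigma(u)\le \overline G(u)\log t+\Big(\frac{\gamma}{\ln 2}+\epsilon\Big)\overline F(t).$$
   Context: $\log$ is base 2 and $\ln$ is natural log. A smoothed envelope distribution is a c.d.f. $F$ on $\mathbb R_+$ with continuous derivative; $\overline F=1-F$, $\overline G=1-G$, $U(t)=\overline F^{-1}(1/t)$, and $F\in\mathrm{MDA}(\gamma)$ means there exist $A_n>0$ with $F^n(A_nx+U(n))\to\exp(-(1+\gamma x)^{-1/\gamma})$ (interpreted as $\exp(-e^{-x})$ when $\gamma=0$) for all $x$ with $1+\gamma x>0$. ($\overline G\le\overline F$ holds when $G$ is the marginal of a source in the envelope class defined by $F$.) *)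

(* Defs.v *)
From Stdlib Require Import Reals.
From Coquelicot Require Import Coquelicot.
Open Scope R_scope.

Definition log2 (x : R) : R := ln x / ln 2.

Record smoothed_envelope (F : R -> R) : Prop := {
  se_support : forall x, x < 0 -> F x = 0;
  se_mono : forall x y, x <= y -> F x <= F y;
  se_range : forall x, 0 <= F x <= 1;
  se_lim : is_lim F p_infty 1;
  se_cont : forall x, continuous F x;
  se_deriv : exists f : R -> R,
      forall x, 0 < x -> is_derive F x (f x) /\ continuous f x
}.

Definition Fbar (F : R -> R) (x : R) : R := 1 - F x.

(* U(t) = Fbar^{-1}(1/t), taken as the generalized (left-continuous) inverse
   inf { x | Fbar x <= 1/t }. *)
Definition U (F : R -> R) (t : R) : R :=
  real (Glb_Rbar (fun x => Fbar F x <= / t)).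

Definition gev (gamma x : R) : R :=
  if Req_EM_T gamma 0 then exp (- exp (- x))
  else exp (- Rpower (1 + gamma * x) (- / gamma)).

Definition MDA (F : R -> R) (gamma : R) : Prop :=
  exists A : nat -> R, (forall n, 0 < A n) /\
    forall x, 0 < 1 + gamma * x ->
      is_lim_seq (fun n => (F (A n * x + U F (INR n))) ^ n) (gev gamma x).

Definition pmf_Nplus (p : nat -> R) : Prop :=
  p 0%nat = 0 /\ (forall k, 0 <= p k) /\ is_series p 1.

Definition Gbar (p : nat -> R) (x : R) : R :=
  Series (fun k => if Rlt_dec x (INR k) then p k else 0).

(* Sigma(u) = E[ 1{X > u} log(1 + X - u) ], an extended real (limit of the
   nondecreasing partial sums). *)
Definition Sigma (p : nat -> R) (u : R) : Rbar :=
  Lim_seq (fun N => sum_n (fun k =>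
     if Rlt_dec u (INR k) then p k * log2 (1 + INR k - u) else 0) N).

(* Main.v *)
Require Import Defs.
From Stdlib Require Import Reals Lra Lia.
From Coquelicot Require Import Coquelicot.
Open Scope R_scope.

Lemma psum_le_Gbar p y N : pmf_Nplus p ->
  sum_n (fun k => if Rlt_dec y (INR k) then p k else 0) N <= Gbar p y.
Proof.
  intros [H0 [Hp Hs]].
  set (a := fun k => if Rlt_dec y (INR k) then p k else 0).
  assert (Ha : forall k, 0 <= a k <= p k).
  { intro k; unfold a; destruct (Rlt_dec y (INR k)); split; try lra; apply Hp. }
  assert (Hex : ex_series a).
  { apply (ex_series_le a p). intro k. rewrite Rabs_pos_eq; apply Ha.
    exists 1; exact Hs. }
  assert (Hl : is_lim_seq (sum_n a) (Series a)) by exact (Series_correct a Hex).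
  unfold Gbar. fold a.
  assert (Hle : Rbar_le (sum_n a N) (Series a)).
  { apply (is_lim_seq_le_loc (fun _ => sum_n a N) (sum_n a)).
    - exists N. intros n Hn. induction Hn. lra.
      rewrite sum_Sn. unfold plus; simpl. specialize (Ha (S m)). lra.
    - apply is_lim_seq_const.
    - exact Hl. }
  exact Hle.
Qed.

Lemma gev_pos g x : 0 < gev g x.
Proof. unfold gev; destruct (Req_EM_T g 0); apply exp_pos. Qed.

Lemma pow_zero_S n : (0 ^ S n = 0)%R.
Proof. simpl; ring. Qed.

Lemma mda_neg F g (A : nat -> R) x : smoothed_envelope F ->
  is_lim_seq (fun n => (F (A n * x + U F (INR n))) ^ n) (gev g x) ->
  exists N, forall n, (N <= n)%nat -> 0 <= A n * x + U F (INR n).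
Proof.
  intros HF Hl.
  apply is_lim_seq_spec in Hl.
  assert (Hg := gev_pos g x).
  destruct (Hl (mkposreal _ Hg)) as [N HN].
  exists (S N). intros n Hn.
  destruct (Rle_dec 0 (A n * x + U F (INR n))) as [h|h]; [exact h|].
  exfalso. specialize (HN n ltac:(lia)). simpl in HN.
  rewrite (se_support F HF) in HN by lra.
  destruct n as [|n]; [lia|]. rewrite pow_zero_S in HN.
  rewrite Rminus_0_l, Rabs_Ropp, Rabs_pos_eq in HN; lra.
Qed.

Lemma pow_exp_le a n : 0 <= a <= 1 -> (1 - a) ^ n <= exp (- (INR n * a)).
Proof.
  intros Ha. induction n as [|n IH].
  - simpl. rewrite Rmult_0_l, Ropp_0, exp_0. lra.
  - rewrite S_INR. simpl pow.
    replace (- ((INR n + 1) * a)) with (- a + - (INR n * a)) by ring.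
    rewrite exp_plus.
    apply Rmult_le_compat; try lra.
    + apply pow_le; lra.
    + pose proof (exp_ineq1_le (- a)). lra.
Qed.

Lemma mda_up F g (A : nat -> R) x H : smoothed_envelope F ->
  is_lim_seq (fun n => (F (A n * x + U F (INR n))) ^ n) (gev g x) ->
  gev g x = exp (- H) -> forall e, 0 < e ->
  exists N, forall n, (N <= n)%nat -> INR n * Fbar F (A n * x + U F (INR n)) <= H + e.
Proof.
  intros HF Hl Hg e He.
  apply is_lim_seq_spec in Hl.
  assert (Hd : 0 < exp (- H) - exp (- (H + e))).
  { assert (exp (- (H + e)) < exp (- H)) by (apply exp_increasing; lra). lra. }
  destruct (Hl (mkposreal _ Hd)) as [N HN].
  exists N. intros n Hn. specialize (HN n Hn). simpl in HN. rewrite Hg in HN.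
  set (y := A n * x + U F (INR n)) in *.
  pose proof (se_range F HF y) as Hr.
  assert (Hp := pow_exp_le (Fbar F y) n).
  unfold Fbar in Hp. replace (1 - (1 - F y)) with (F y) in Hp by ring.
  specialize (Hp ltac:(lra)).
  apply Rabs_lt_between in HN.
  assert (exp (- (H + e)) < exp (- (INR n * Fbar F y))) by (unfold Fbar; lra).
  apply exp_lt_inv in H0. lra.
Qed.

Lemma U_bounds F n s : smoothed_envelope F -> (2 <= n) ->
  Fbar F s <= / n -> 0 <= U F n <= s.
Proof.
  intros HF Hn Hs.
  destruct (Glb_Rbar_correct (fun x => Fbar F x <= / n)) as [Hlb Hglb].
  assert (H1 : Rbar_le (Glb_Rbar (fun x => Fbar F x <= / n)) s) by (apply Hlb; exact Hs).
  assert (H2 : Rbar_le 0 (Glb_Rbar (fun x => Fbar F x <= / n))).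
  { apply Hglb. intros z Hz. simpl.
    destruct (Rle_dec 0 z) as [h|h]; [exact h|].
    exfalso. unfold Fbar in Hz. rewrite (se_support F HF) in Hz by lra.
    assert (/ n <= / 2) by (apply Rinv_le_contravar; lra). lra. }
  unfold U. destruct (Glb_Rbar (fun x => Fbar F x <= / n)) as [r| |]; simpl in *; try tauto.
Qed.

Lemma contract F g (A : nat -> R) x' x L z c : smoothed_envelope F ->
  (forall x, F x < 1) -> (forall n, 0 < A n) ->
  (forall x, 0 < 1 + g * x ->
      is_lim_seq (fun n => (F (A n * x + U F (INR n))) ^ n) (gev g x)) ->
  x' < 0 -> 0 < 1 + g * x' -> 0 < x -> 0 < 1 + g * x -> 0 < L ->
  x <= L * (- x') -> gev g x = exp (- exp (- z)) -> exp (- z) < c ->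
  exists s0, 0 <= s0 /\ forall s, s0 <= s -> Fbar F (exp L * s) <= c * Fbar F s.
Proof.
  intros HF Hlt HApos HM Hx'1 Hx'2 Hx1 Hx2 HL Hxx Hgev Hc.
  set (H := exp (- z)) in *.
  set (e := (c - H) / 2).
  assert (He : 0 < e) by (unfold e; lra).
  destruct (mda_up F g A x H HF (HM x Hx2) Hgev e He) as [N1 HN1].
  destruct (mda_neg F g A x' HF (HM x' Hx'2)) as [N2 HN2].
  assert (HH : 0 < H) by apply exp_pos.
  destruct (nfloor_ex ((H + e) / e)) as [N3 HN3].
  { apply Rlt_le, Rdiv_lt_0_compat; lra. }
  set (N := (N1 + N2 + N3 + 2)%nat).
  assert (HNpos : 0 < INR N + 1) by (pose proof (pos_INR N); lra).
  pose proof (proj2 (is_lim_spec F p_infty 1) (se_lim F HF)) as Hlim.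
  destruct (Hlim (mkposreal _ (Rinv_0_lt_compat _ HNpos))) as [M HMl].
  exists (Rmax (M + 1) 0). split; [apply Rmax_r|].
  intros s Hs.
  assert (Hs0 : Fbar F s < / (INR N + 1)).
  { specialize (HMl (Rmax (M+1) 0) ltac:(pose proof (Rmax_l (M+1) 0); lra)).
    simpl in HMl. apply Rabs_lt_between in HMl.
    pose proof (se_mono F HF _ _ Hs). unfold Fbar. lra. }
  assert (Hphi : 0 < Fbar F s) by (unfold Fbar; specialize (Hlt s); lra).
  destruct (nfloor_ex (/ Fbar F s)) as [n [Hn1 Hn2]].
  { apply Rlt_le, Rinv_0_lt_compat; exact Hphi. }
  assert (HnN : INR N < INR n).
  { assert (INR N + 1 < / Fbar F s).
    { rewrite <- (Rinv_inv (INR N + 1)). apply Rinv_lt_contravar; try lra.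
      apply Rmult_lt_0_compat; [lra|]. apply Rinv_0_lt_compat; lra. }
    lra. }
  apply INR_lt in HnN.
  assert (Hn2' : 2 <= INR n).
  { replace 2 with (INR 2) by (simpl; ring). apply le_INR. unfold N in HnN. lia. }
  assert (Hphin : Fbar F s <= / INR n).
  { rewrite <- (Rinv_inv (Fbar F s)). apply Rinv_le_contravar; lra. }
  destruct (U_bounds F (INR n) s HF Hn2' Hphin) as [HU0 HUs].
  specialize (HN2 n ltac:(unfold N in HnN; lia)).
  specialize (HN1 n ltac:(unfold N in HnN; lia)).
  set (Un := U F (INR n)) in *.
  assert (HA : 0 < A n).
  { apply HApos. }
  assert (Hy : A n * x + Un <= exp L * s).
  { assert (A n * x <= L * Un).
    { apply Rle_trans with (A n * (L * - x')). apply Rmult_le_compat_l; lra.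
      nra. }
    pose proof (exp_ineq1_le L). nra. }
  pose proof (se_mono F HF _ _ Hy) as Hmono.
  assert (Hb : Fbar F (exp L * s) <= (H + e) / INR n).
  { apply Rle_trans with (Fbar F (A n * x + Un)). unfold Fbar; lra.
    apply Rmult_le_reg_l with (INR n); [lra|].
    field_simplify; lra. }
  assert (HN3' : (H + e) / e <= INR n).
  { assert (INR N3 + 1 <= INR n).
    { rewrite <- S_INR. apply le_INR. unfold N in HnN. lia. }
    lra. }
  assert (Hk : (H + e) <= e * INR n).
  { apply Rmult_le_compat_l with (r := e) in HN3'; [|lra].
    field_simplify in HN3'; lra. }
  assert (Hlow : / (INR n + 1) < Fbar F s).
  { rewrite <- (Rinv_inv (Fbar F s)). apply Rinv_lt_contravar; try lra.
    apply Rmult_lt_0_compat; [|lra]. apply Rinv_0_lt_compat; lra. }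
  apply Rle_trans with ((H + e) / INR n); [exact Hb|].
  apply Rle_trans with (c / (INR n + 1)).
  { unfold Rdiv. apply Rmult_le_reg_l with (INR n * (INR n + 1)); [nra|].
    field_simplify; [|lra|lra]. unfold e in *. nra. }
  unfold Rdiv. apply Rmult_le_compat_l; [lra|]. lra.
Qed.

Lemma expz_lt z K L : 0 < z -> 0 < K -> L < z * (K - L) -> exp (- z) < 1 - L / K.
Proof.
  intros Hz HK HL.
  pose proof (exp_ineq1_le z) as He.
  rewrite exp_Ropp.
  assert (/ exp z <= / (1 + z)) by (apply Rinv_le_contravar; lra).
  assert (/ (1 + z) < 1 - L / K).
  { apply Rmult_lt_reg_l with ((1 + z) * K); [nra|].
    field_simplify; [|lra|lra]. nra. }
  lra.
Qed.

Lemma ln_lower y : 0 < y -> y / (1 + y) <= ln (1 + y).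
Proof.
  intro Hy.
  set (w := / (1 + y)).
  assert (Hw : 0 < w) by (unfold w; apply Rinv_0_lt_compat; lra).
  assert (ln w <= w - 1).
  { pose proof (exp_ineq1_le (w - 1)).
    rewrite <- (ln_exp (w - 1)). apply ln_le; lra. }
  unfold w in H. rewrite ln_Rinv in H by lra.
  replace (y / (1 + y)) with (1 - / (1 + y)) by (field; lra). lra.
Qed.

Lemma choose F g d : smoothed_envelope F -> MDA F g -> 0 <= g ->
  (forall x, F x < 1) -> 0 < d ->
  exists L c s0, 0 < L /\ 0 <= c < 1 /\ L <= (g + d) * (1 - c) /\ 0 <= s0 /\
    forall s, s0 <= s -> Fbar F (exp L * s) <= c * Fbar F s.
Proof.
  intros HF [A [HA HM]] Hg Hlt Hd.
  destruct (Req_EM_T g 0) as [Hg0|Hg0].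
  - subst g.
    set (M := 2 / d). set (L := d / 4).
    assert (HMp : 0 < M) by (unfold M; apply Rdiv_lt_0_compat; lra).
    assert (HLp : 0 < L) by (unfold L; lra).
    set (c := 1 - L / (0 + d)).
    assert (Hz : exp (- (L * M)) < c).
    { apply expz_lt; try nra. unfold L, M. field_simplify; lra. }
    destruct (contract F 0 A (- M) (L * M) L (L * M) c HF Hlt HA HM)
      as [s0 [Hs0 Hc]]; try lra; try nra.
    { unfold gev. destruct (Req_EM_T 0 0); [reflexivity|lra]. }
    exists L, c, s0. pose proof (exp_pos (- (L * M))).
    assert (Hc1 : c = 3/4) by (unfold c, L; field; lra).
    split; [lra|]. split; [lra|]. split.
    + rewrite Hc1. unfold L. lra.
    + split; [lra|exact Hc].
  - assert (Hgp : 0 < g) by lra.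
    set (a := g / (g + d / 2)).
    set (L := d / (4 * (g + 1))).
    assert (HLp : 0 < L) by (unfold L; apply Rdiv_lt_0_compat; lra).
    assert (Ha : 0 < a < 1).
    { unfold a; split. apply Rdiv_lt_0_compat; lra.
      apply Rmult_lt_reg_r with (g + d/2); [lra|]. field_simplify; lra. }
    set (x' := - (a / g)).
    set (x := L * (a / g)).
    set (z := ln (1 + g * x) / g).
    set (c := 1 - L / (g + d)).
    assert (Hgx : g * x = a * L) by (unfold x; field; lra).
    assert (Hz0 : a * L / (1 + a * L) <= ln (1 + a * L)) by (apply ln_lower; nra).
    assert (Hzp : 0 < z).
    { unfold z. rewrite Hgx. apply Rdiv_lt_0_compat; [|lra].
      apply Rlt_le_trans with (a * L / (1 + a * L)); [|exact Hz0].
      apply Rdiv_lt_0_compat; nra. }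
    assert (Hz : exp (- z) < c).
    { apply expz_lt; try lra.
      assert (Hzl : a * L / (g * (1 + a * L)) <= z).
      { unfold z. rewrite Hgx. unfold Rdiv. rewrite Rinv_mult.
        replace (a * L * (/ g * / (1 + a * L))) with ((a * L * / (1 + a * L)) * / g) by ring.
        apply Rmult_le_compat_r; [apply Rlt_le, Rinv_0_lt_compat; lra|exact Hz0]. }
      assert (Hag : a * (g + d / 2) = g) by (unfold a; field; lra).
      assert (HL2 : L * (1 + g) < d / 2) by (replace (L * (1 + g)) with (d / 4) by (unfold L; field; lra); lra).
      assert (Hpos : 0 < g + d - L) by nra.
      apply Rlt_le_trans with (a * L / (g * (1 + a * L)) * (g + d - L));
        [|apply Rmult_le_compat_r; lra].
      apply Rmult_lt_reg_r with (g * (1 + a * L)); [nra|].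
      field_simplify; [|nra]. 
      (* a*L*(g+d-L) > L*g*(1+aL) *)
      assert (Hk : 0 < L * (a * (d / 2 - L * (1 + g)))) by (apply Rmult_lt_0_compat; [lra| apply Rmult_lt_0_compat; lra]).
      assert (Hk2 : L * (a * (g + d / 2)) = L * g) by (rewrite Hag; ring).
      nra. }
    destruct (contract F g A x' x L z c HF Hlt HA HM)
      as [s0 [Hs0 Hc]]; try lra.
    { unfold x'. assert (0 < a / g) by (apply Rdiv_lt_0_compat; lra). lra. }
    { unfold x'. replace (1 + g * - (a / g)) with (1 - a) by (field; lra). lra. }
    { unfold x. assert (0 < a / g) by (apply Rdiv_lt_0_compat; lra). nra. }
    { rewrite Hgx. nra. }
    { unfold x, x'. lra. }
    { unfold gev. destruct (Req_EM_T g 0); [lra|]. unfold Rpower.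
      f_equal. f_equal. unfold z. f_equal. field. lra. }
    exists L, c, s0. pose proof (exp_pos (- z)).
    split; [lra|]. split.
    { split; [lra|]. unfold c. assert (0 < L / (g + d)) by (apply Rdiv_lt_0_compat; lra). lra. }
    split.
    + unfold c. right. field. lra.
    + split; [lra|exact Hc].
Qed.

Lemma sum_n_le_loc (a b : nat -> R) N :
  (forall k, (k <= N)%nat -> a k <= b k) -> sum_n a N <= sum_n b N.
Proof.
  induction N as [|N IH]; intro H.
  - rewrite !sum_O. apply H; lia.
  - rewrite !sum_Sn. unfold plus; simpl.
    apply Rplus_le_compat; [apply IH; intros; apply H; lia|apply H; lia].
Qed.

Lemma sum_n_plusR (a b : nat -> R) N :
  sum_n (fun k => a k + b k) N = sum_n a N + sum_n b N.
Proof. apply (sum_n_plus a b N). Qed.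

Lemma sum_n_multR (a : nat -> R) c N :
  sum_n (fun k => a k * c) N = sum_n a N * c.
Proof. apply (sum_n_mult_r c a N). Qed.

Definition bpt (t L : R) (j : nat) : R := t * exp (INR j * L).

Fixpoint cnt (k t L : R) (J : nat) : R :=
  match J with
  | O => 0
  | S J => cnt k t L J + (if Rlt_dec (bpt t L J) k then 1 else 0)
  end.

Lemma cnt_nonneg k t L J : 0 <= cnt k t L J.
Proof. induction J; simpl. lra. destruct (Rlt_dec _ _); lra. Qed.

Lemma cnt_bound k t L J : 0 < t -> 0 < L ->
  Rmin k (bpt t L J) <= t * exp (L * cnt k t L J).
Proof.
  intros Ht HL. induction J as [|J IH]; simpl.
  - unfold bpt. simpl. rewrite Rmult_0_l, Rmult_0_r, exp_0, Rmult_1_r. apply Rmin_r.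
  - assert (Hb : bpt t L (S J) = exp L * bpt t L J).
    { unfold bpt. rewrite S_INR. replace ((INR J + 1) * L) with (INR J * L + L) by ring.
      rewrite exp_plus. ring. }
    destruct (Rlt_dec (bpt t L J) k) as [h|h].
    + rewrite Rmin_right in IH by lra.
      replace (L * (cnt k t L J + 1)) with (L * cnt k t L J + L) by ring.
      rewrite exp_plus.
      apply Rle_trans with (bpt t L (S J)); [apply Rmin_r|].
      rewrite Hb. pose proof (exp_pos L). nra.
    + rewrite Rplus_0_r. rewrite Rmin_left in IH by lra.
      apply Rle_trans with k; [apply Rmin_l|exact IH].
Qed.

Lemma iterate F L c s0 t : 0 < t -> s0 <= t -> 0 < L -> 0 <= c ->
  (forall s, s0 <= s -> Fbar F (exp L * s) <= c * Fbar F s) ->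
  forall j, Fbar F (bpt t L j) <= c ^ j * Fbar F t.
Proof.
  intros Ht Hs HL Hc Hcon j. induction j as [|j IH].
  - unfold bpt; simpl. rewrite Rmult_0_l, exp_0, Rmult_1_r. lra.
  - assert (Hb : bpt t L (S j) = exp L * bpt t L j).
    { unfold bpt. rewrite S_INR. replace ((INR j + 1) * L) with (INR j * L + L) by ring.
      rewrite exp_plus. ring. }
    rewrite Hb. simpl pow.
    assert (Hge : s0 <= bpt t L j).
    { unfold bpt. pose proof (exp_ineq1_le (INR j * L)).
      pose proof (pos_INR j). assert (0 <= INR j * L) by nra. nra. }
    apply Rle_trans with (c * Fbar F (bpt t L j)); [apply Hcon; exact Hge|].
    rewrite Rmult_assoc. apply Rmult_le_compat_l; lra.
Qed.

Lemma Qbound F p L c s0 t N : pmf_Nplus p -> (forall x, Gbar p x <= Fbar F x) ->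
  0 < t -> s0 <= t -> 0 < L -> 0 <= c < 1 ->
  (forall s, s0 <= s -> Fbar F (exp L * s) <= c * Fbar F s) ->
  forall J, sum_n (fun k => p k * cnt (INR k) t L J) N <= Fbar F t * (1 - c ^ J) / (1 - c).
Proof.
  intros Hp HG Ht Hs HL Hc Hcon J. induction J as [|J IH].
  - simpl. rewrite (sum_n_ext _ (fun _ => 0)).
    + rewrite sum_n_const. unfold Rdiv. rewrite Rminus_diag. lra.
    + intro n. simpl. apply Rmult_0_r.
  - simpl cnt.
    rewrite (sum_n_ext _ (fun k => p k * cnt (INR k) t L J +
               (if Rlt_dec (bpt t L J) (INR k) then p k else 0))).
    2:{ intro k. simpl. destruct (Rlt_dec _ _); simpl; ring. }
    rewrite sum_n_plusR.
    pose proof (psum_le_Gbar p (bpt t L J) N Hp).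
    pose proof (HG (bpt t L J)).
    pose proof (iterate F L c s0 t Ht Hs HL (proj1 Hc) Hcon J).
    apply Rle_trans with (Fbar F t * (1 - c ^ J) / (1 - c) + c ^ J * Fbar F t); [|right; simpl pow; field; lra]. apply Rplus_le_compat; [exact IH|]. eapply Rle_trans; [exact H|]. lra.
Qed.

Theorem lemma3 (F : R -> R) (gamma : R) :
  smoothed_envelope F -> MDA F gamma -> 0 <= gamma ->
  (forall x, F x < 1) ->
  forall eps, 0 < eps ->
  exists t0 : R, forall p : nat -> R, pmf_Nplus p ->
    (forall x, Gbar p x <= Fbar F x) ->
    forall t, t0 < t -> forall u, 1 <= u ->
      Rbar_le (Sigma p u) (Gbar p u * log2 t + (gamma / ln 2 + eps) * Fbar F t).
Proof.
  intros HF HM Hg Hlt eps Heps.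
  assert (Hln2 : 0 < ln 2) by (rewrite <- ln_1; apply ln_increasing; lra).
  destruct (choose F gamma (eps * ln 2) HF HM Hg Hlt ltac:(nra))
    as [L [c [s0 [HL [Hc [HLc [Hs0 Hcon]]]]]]].
  exists (s0 + 1). intros p Hp HG t Ht u Hu.
  assert (Ht1 : 1 < t) by lra.
  assert (Hts : s0 <= t) by lra.
  unfold Sigma.
  set (RHS := Gbar p u * log2 t + (gamma / ln 2 + eps) * Fbar F t).
  rewrite <- (Lim_seq_const RHS).
  apply Lim_seq_le_loc. exists 0%nat. intros N _.
  assert (HNL : 0 <= INR N / L) by (apply Rdiv_le_0_compat; [apply pos_INR|lra]).
  destruct (nfloor_ex (INR N / L) HNL) as [n0 Hn0].
  set (J := S n0).
  assert (HJ : INR N <= bpt t L J).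
  { unfold bpt, J. rewrite S_INR.
    pose proof (exp_ineq1_le ((INR n0 + 1) * L)).
    assert (INR N < (INR n0 + 1) * L).
    { apply Rmult_lt_reg_r with (/ L). apply Rinv_0_lt_compat; lra.
      replace ((INR n0 + 1) * L * / L) with (INR n0 + 1) by (field; lra).
      unfold Rdiv in Hn0. lra. }
    assert (0 < exp ((INR n0 + 1) * L)) by apply exp_pos.
    nra. }
  assert (Hlog2t : 0 <= log2 t).
  { unfold log2. apply Rdiv_le_0_compat; [|lra].
    rewrite <- ln_1. apply ln_le; lra. }
  destruct Hp as [Hp0 [Hpp Hps]].
  apply Rle_trans with (sum_n (fun k => (if Rlt_dec u (INR k) then p k else 0) * log2 t +
                            p k * cnt (INR k) t L J * (L / ln 2)) N).
  - apply sum_n_le_loc. intros k Hk.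
    pose proof (cnt_nonneg (INR k) t L J) as Hcn.
    assert (HLl : 0 < L / ln 2) by (apply Rdiv_lt_0_compat; lra).
    specialize (Hpp k).
    destruct (Rlt_dec u (INR k)) as [h|h].
    + assert (Hk1 : INR k <= bpt t L J).
      { apply Rle_trans with (INR N); [apply le_INR; exact Hk|exact HJ]. }
      pose proof (cnt_bound (INR k) t L J ltac:(lra) HL) as Hcb.
      rewrite Rmin_left in Hcb by exact Hk1.
      assert (Hlk : ln (1 + INR k - u) <= ln t + L * cnt (INR k) t L J).
      { apply Rle_trans with (ln (INR k)). apply ln_le; lra.
        rewrite <- (ln_exp (L * cnt (INR k) t L J)), <- ln_mult by (try lra; apply exp_pos).
        apply ln_le; lra. }
      assert (Hl2 : log2 (1 + INR k - u) <= log2 t + cnt (INR k) t L J * (L / ln 2)).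
      { unfold log2. apply Rmult_le_reg_r with (ln 2); [lra|].
        field_simplify; lra. }
      replace (p k * cnt (INR k) t L J * (L / ln 2)) with (p k * (cnt (INR k) t L J * (L / ln 2))) by ring.
      rewrite <- Rmult_plus_distr_l. apply Rmult_le_compat_l; lra.
    + assert (0 <= p k * cnt (INR k) t L J * (L / ln 2)).
      { apply Rmult_le_pos; [apply Rmult_le_pos|]; lra. }
      lra.
  - rewrite sum_n_plusR, sum_n_multR, sum_n_multR.
    pose proof (psum_le_Gbar p u N (conj Hp0 (conj Hpp Hps))) as H1.
    pose proof (Qbound F p L c s0 t N (conj Hp0 (conj Hpp Hps)) HG ltac:(lra) Hts HL Hc Hcon J) as H2.
    set (S1 := sum_n (fun k => if Rlt_dec u (INR k) then p k else 0) N) in *.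
    set (Q := sum_n (fun k => p k * cnt (INR k) t L J) N) in *.
    assert (Hphi : 0 <= Fbar F t) by (unfold Fbar; pose proof (se_range F HF t); lra).
    assert (HcJ : 0 <= c ^ J) by (apply pow_le; lra).
    assert (H3 : Q <= Fbar F t / (1 - c)).
    { apply Rle_trans with (1 := H2). unfold Rdiv.
      apply Rmult_le_compat_r; [apply Rlt_le, Rinv_0_lt_compat; lra|]. nra. }
    assert (H4 : Q * (L / ln 2) <= (gamma / ln 2 + eps) * Fbar F t).
    { apply Rle_trans with (Fbar F t / (1 - c) * (L / ln 2)).
      apply Rmult_le_compat_r; [apply Rlt_le, Rdiv_lt_0_compat; lra|exact H3].
      replace (Fbar F t / (1 - c) * (L / ln 2)) with (Fbar F t * (L / (1 - c)) / ln 2)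
        by (field; lra).
      replace ((gamma / ln 2 + eps) * Fbar F t) with (Fbar F t * (gamma + eps * ln 2) / ln 2)
        by (field; lra).
      unfold Rdiv. apply Rmult_le_compat_r; [apply Rlt_le, Rinv_0_lt_compat; lra|].
      apply Rmult_le_compat_l; [lra|].
      apply Rmult_le_reg_r with (1 - c); [lra|].
      replace (L * / (1 - c) * (1 - c)) with L by (field; lra). lra. }
    unfold RHS.
    assert (S1 * log2 t <= Gbar p u * log2 t) by (apply Rmult_le_compat_r; lra).
    change (S1 * log2 t + Q * (L / ln 2) <= Gbar p u * log2 t + (gamma / ln 2 + eps) * Fbar F t). lra.
Qed.
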